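(* Let $F$ be a partially colored forest. If Alice can win the $3$-Reduced Coloring Game on $\mathcal{R}'(F)$, then Alice can win the $3$-coloring game on $F$.
   Context: A partial coloring assigns to some vertices colors from a set $C$ of $3$ colors so that adjacent colored vertices differ; a color is legal for an uncolored vertex $v$ if no neighbor of $v$ has it. The $k$-coloring game on a partially colored graph: Alice and Bob alternate, Alice first, each coloring an uncolored vertex with a legal color from a $k$-set of colors; Bob wins if at some point an uncolored vertex has no legal color, Alice wins if all vertices get colored. The $k$-Reduced Coloring Game ($k$-RCG) is the same except that: Alice may only color vertices of degree at least $k$; Alice wins once every vertex of degree at least $k$ is colored; Bob plays first; and Bob may pass. For a partially colored forest $F$, a trunk of $F$ is a maximal connected subgraph $R$ such that every colored vertex of $R$ is a leaf of $R$; $\mathcal{R}(F)$ is the partially colored forest formed by the disjoint union of all trunks of $F$ (a colored vertex lying in several trunks appears as a separate colored copy in each). For a graph $G$, $E_{>2}(G)$ is the set of edges $xy$ of $G$ with $d_G(x)>2$ or $d_G(y)>2$. The reduced graph of $F$ is $\mathcal{R}'(F)=\mathcal{R}(F)-\{xy: xy\notin E_{>2}(\mathcal{R}(F))\}$, i.e. $\mathcal{R}(F)$ with every edge both of whose endpoints have degree at most $2$ in $\mathcal{R}(F)$ deleted. *)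

(* Defs.v *)
From mathcomp Require Import all_boot.
Set Implicit Arguments.
Unset Strict Implicit.
Unset Printing Implicit Defensive.

(* Graphs: a finite vertex type V with adjacency relation adj : rel V
   (simple graph = symmetric, irreflexive).  Colors: 'I_k.
   A partial coloring is c : V -> option 'I_k (None = uncolored). *)

Section Graphs.
Variable V : finType.
Variable adj : rel V.

(* a forest: no cycle (a duplicate-free closed walk with >= 3 vertices) *)
Definition forest : Prop := forall p : seq V, ucycle adj p -> size p <= 2.

Definition degree (v : V) : nat := #|[set w | adj v w]|.

Variable k : nat.

Definition proper_partial (c : V -> option 'I_k) : Prop :=
  forall x y, adj x y -> c x != None -> c x != c y.

Definition legal (c : V -> option 'I_k) (v : V) (a : 'I_k) : bool :=
  [forall w, adj v w ==> (c w != Some a)].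

Definition stuck (c : V -> option 'I_k) : Prop :=
  exists v, c v = None /\ forall a, ~~ legal c v a.

Definition upd (c : V -> option 'I_k) (v : V) (a : 'I_k) : V -> option 'I_k :=
  fun w => if w == v then Some a else c w.

(* k-coloring game.  cg_alice c : Alice (to move) has a winning strategy
   from position c; cg_bob c : Alice wins from c when Bob is to move. *)
Inductive cg_alice : (V -> option 'I_k) -> Prop :=
| CGA_done c : (forall v, c v <> None) -> cg_alice c
| CGA_move c v a : ~ stuck c -> c v = None -> legal c v a ->
    cg_bob (upd c v a) -> cg_alice c
with cg_bob : (V -> option 'I_k) -> Prop :=
| CGB_done c : (forall v, c v <> None) -> cg_bob c
| CGB_move c : ~ stuck c ->
    (forall v a, c v = None -> legal c v a -> cg_alice (upd c v a)) ->
    cg_bob c.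

Definition alice_wins_cg (c : V -> option 'I_k) : Prop := cg_alice c.

Definition high (v : V) : bool := k <= degree v.

Definition rcg_done (c : V -> option 'I_k) : Prop :=
  forall v, high v -> c v <> None.

Inductive rcg_alice : (V -> option 'I_k) -> Prop :=
| RA_done c : rcg_done c -> rcg_alice c
| RA_move c v a : ~ stuck c -> high v -> c v = None -> legal c v a ->
    rcg_bob (upd c v a) -> rcg_alice c
with rcg_bob : (V -> option 'I_k) -> Prop :=
| RB_done c : rcg_done c -> rcg_bob c
| RB_move c : ~ stuck c ->
    rcg_alice c (* Bob passes *) ->
    (forall v a, c v = None -> legal c v a -> rcg_alice (upd c v a)) ->
    rcg_bob c.

(* Alice wins the k-RCG (Bob moves first) *)
Definition alice_wins_rcg (c : V -> option 'I_k) : Prop := rcg_bob c.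

End Graphs.

(* A subgraph of (V, adj) is a pair (S, E) with
   S a vertex set and E a symmetric set of ordered pairs (both orientations
   of each edge), each an edge of adj with both ends in S. *)
Section Reduced.
Variable V : finType.
Variable adj : rel V.
Variable k : nat.
Variable c : V -> option 'I_k.

Definition subg := ({set V} * {set (V * V)})%type.

Definition is_subgraph (R : subg) : bool :=
  [forall x, forall y, ((x, y) \in R.2) ==>
     [&& adj x y, x \in R.1, y \in R.1 & (y, x) \in R.2]].

Definition subg_le (R R' : subg) : bool := (R.1 \subset R'.1) && (R.2 \subset R'.2).

Definition subg_connected (R : subg) : bool :=
  (R.1 != set0) &&
  [forall x in R.1, forall y in R.1, connect [rel a b | (a, b) \in R.2] x y].

Definition subg_deg (R : subg) (x : V) : nat := #|[set y | (x, y) \in R.2]|.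

Definition colored_leaves (R : subg) : bool :=
  [forall x in R.1, (c x != None) ==> (subg_deg R x == 1)].

Definition trunk_cand (R : subg) : bool :=
  [&& is_subgraph R, subg_connected R & colored_leaves R].

Definition trunk (R : subg) : bool :=
  trunk_cand R && [forall R' : subg, trunk_cand R' ==> subg_le R R' ==> (R' == R)].

(* vertices of R(F): pairs (trunk, vertex of that trunk) -- disjoint union *)
Definition RV := {p : (subg * V) | trunk p.1 && (p.2 \in p.1.1)}.

Definition R_adj : rel RV :=
  fun u w => ((val u).1 == (val w).1) && (((val u).2, (val w).2) \in (val u).1.2).

Definition R_col (u : RV) : option 'I_k := c (val u).2.

Definition R'_adj : rel RV :=
  fun u w => R_adj u w && ((2 < degree R_adj u) || (2 < degree R_adj w)).

End Reduced.

(* Main.v *)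
Require Import Defs.
From mathcomp Require Import all_boot zify.
From Stdlib Require Import FunctionalExtensionality.
Set Implicit Arguments. Unset Strict Implicit. Unset Printing Implicit Defensive.

Scheme ra_ind := Induction for rcg_alice Sort Prop
  with rb_ind := Induction for rcg_bob Sort Prop.

Section Graph.
Variable V : finType.
Variable adj : rel V.
Variable c : V -> option 'I_3.
Hypothesis sym : symmetric adj.
Hypothesis irr : irreflexive adj.
Hypothesis forF : forest adj.

Local Notation cand := (@trunk_cand V adj 3 c).
Local Notation trk := (@trunk V adj 3 c).

Lemma subgP (R : subg V) x y : is_subgraph adj R -> (x, y) \in R.2 ->
  [/\ adj x y, x \in R.1, y \in R.1 & (y, x) \in R.2].
Proof.
move=> /forallP /(_ x) /forallP /(_ y) /implyP H /H /and4P [] *; by split.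
Qed.

Lemma candP R : cand R -> [/\ is_subgraph adj R, subg_connected R & colored_leaves c R].
Proof. by case/and3P. Qed.

Lemma leaf_uniq R x y z : cand R -> x \in R.1 -> c x != None ->
  (x, y) \in R.2 -> (x, z) \in R.2 -> y = z.
Proof.
case/candP=> _ _ /forallP /(_ x) /implyP Hl Hx Hc Hy Hz.
move: (Hl Hx) => /implyP /(_ Hc); rewrite /subg_deg => /cards1P [a Ha].
have : y \in [set y | (x, y) \in R.2] by rewrite inE.
have : z \in [set y | (x, y) \in R.2] by rewrite inE.
by rewrite Ha !inE => /eqP -> /eqP ->.
Qed.

Lemma leaf_ex R x : cand R -> x \in R.1 -> c x != None ->
  exists y, (x, y) \in R.2.
Proof.
case/candP=> _ _ /forallP /(_ x) /implyP Hl Hx Hc.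
move: (Hl Hx) => /implyP /(_ Hc); rewrite /subg_deg => /cards1P [a Ha].
exists a. have : a \in [set a]  by rewrite inE.
by rewrite -Ha inE.
Qed.

Lemma cand_conn R x y : cand R -> x \in R.1 -> y \in R.1 ->
  connect [rel a b | (a, b) \in R.2] x y.
Proof.
case/candP=> _ /andP [_ /forallP H] _ Hx Hy.
by move: (H x) => /implyP /(_ Hx) /forallP /(_ y) /implyP /(_ Hy).
Qed.

Lemma no_cyc R v w : cand R -> v \in R.1 -> w \in R.1 -> c w != None ->
  adj v w -> (v, w) \notin R.2 -> False.
Proof.
move=> HR Hv Hw Hcw Hvw Hn.
have [Hsub _ _] := candP HR.
have [y0 Hy0] := leaf_ex HR Hw Hcw.
have [Hwy0 _ Hy0R Hy0w] := subgP Hsub Hy0.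
have y0v : y0 != v.
  apply/eqP=> E; subst y0.
  by move: Hy0w; rewrite (negbTE Hn).
have /connectP [p Hp Hl] := cand_conn HR Hv Hy0R.
move: Hl; case: (shortenP Hp) => p' Hp' Hu _ Hl'.
have wnp : w \notin v :: p'.
  apply/negP=> Hwin.
  move: Hwin; rewrite inE => /orP [/eqP E|Hwin].
    by subst w; move: Hvw; rewrite irr.
  case: (splitPr Hwin) Hp' Hu Hl' => p1 p2.
  rewrite cat_path /= => /and3P [_ H1 H2] Hu Hl'.
  have E1 : last v p1 = y0.
    have [_ _ _ H3] := subgP Hsub H1.
    exact: (leaf_uniq HR Hw Hcw H3 Hy0).
  rewrite last_cat in Hl'.
  case: p2 H2 Hl' Hu => [|z p3] /=.
    by move=> _ E; rewrite E irr in Hwy0.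
  move=> /andP [Hz _] _.
  have E2 : z = y0 by exact: (leaf_uniq HR Hw Hcw Hz Hy0).
  subst z.
  move=> /andP [_]; rewrite cat_uniq => /and3P [_ /hasPn H _].
  have := H y0; rewrite !inE eqxx orbT => /(_ isT).
  have := mem_last v p1; rewrite E1 inE (negbTE y0v) /= => ->.
  by [].
have Hp'adj : path adj v p'.
  apply: sub_path Hp' => a b /= H; by have [] := subgP Hsub H.
have pne : p' != [::].
  by apply/eqP=> E; subst p'; move: Hl' => /= E; subst; rewrite eqxx in y0v.
have Hc : cycle adj (v :: rcons p' w) && uniq (v :: rcons p' w).
  rewrite /= !rcons_path Hp'adj -Hl' (sym y0 w) Hwy0 last_rcons (sym w v) Hvw /=.
  move: wnp Hu; rewrite mem_rcons rcons_uniq !inE negb_or /= => /andP [Hwv ->] /andP [Hvp ->]; by rewrite negb_or (negbTE Hvp) eq_sym Hwv.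
have := forF Hc; rewrite /= size_rcons.
by case: p' pne {Hp' Hu Hl' wnp Hp'adj Hc}.
Qed.


Lemma conn_mono (E1 E2 : {set V * V}) x y : E1 \subset E2 ->
  connect [rel a b | (a, b) \in E1] x y -> connect [rel a b | (a, b) \in E2] x y.
Proof.
move=> H; apply: connect_sub => a b /= Hab; apply: connect1 => /=.
exact: (subsetP H).
Qed.

Lemma trunk_edge T v w : trk T -> v \in T.1 -> c v = None -> adj v w ->
  (v, w) \in T.2.
Proof.
move=> HT Hv Hcv Hvw.
have /andP [HC /forallP Hmax] := HT.
have [Hsub _ Hleaf] := candP HC.
case: (boolP ((v,w) \in T.2)) => // Hn.
pose T' : subg V := (w |: T.1, [set (v,w); (w,v)] :|: T.2).
have HT' : cand T'.
  apply/and3P; split.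
  - apply/forallP => x; apply/forallP => y; apply/implyP => /=.
    rewrite !inE => /orP [/orP [/eqP [-> ->] | /eqP [-> ->]] | Hxy].
    + by rewrite Hvw Hv !eqxx !orbT.
    + by rewrite sym Hvw Hv !eqxx !orbT.
    + have [-> -> -> ->] := subgP Hsub Hxy; by rewrite !orbT.
  - apply/andP; split.
      by apply/set0Pn; exists w; rewrite /T' /= !inE ?eqxx.
    have Hc : forall x, x \in T'.1 ->
        connect [rel a b | (a, b) \in T'.2] x v && connect [rel a b | (a, b) \in T'.2] v x.
      move=> x; rewrite /T' /= !inE => /orP [/eqP ->|Hx].
        by apply/andP; split; apply: connect1; rewrite /T' /= !inE ?eqxx ?orbT.
      apply/andP; split; apply: conn_mono (subsetUr _ _) _; exact: cand_conn.
    apply/forallP => x; apply/implyP => Hx; apply/forallP => y; apply/implyP => Hy.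
    have /andP [H1 _] := Hc x Hx; have /andP [_ H2] := Hc y Hy.
    exact: connect_trans H1 H2.
  - apply/forallP => x; apply/implyP => Hx; apply/implyP => Hcx.
    have xv : x != v by apply/eqP => E; subst x; rewrite Hcv in Hcx.
    case: (eqVneq x w) => [E|xw].
      subst x.
      have wT : w \notin T.1.
        apply/negP => wT; exact: (no_cyc HC Hv wT Hcx Hvw Hn).
      apply/cards1P; exists v; apply/setP => y; rewrite /T' /= !inE !xpair_eqE.
      rewrite (negbTE xv) eqxx /=.
      case: (boolP ((w, y) \in T.2)) => [H|_]; last by rewrite orbF.
      by have [_ H2 _ _] := subgP Hsub H; rewrite H2 in wT.
    have xT : x \in T.1 by move: Hx; rewrite /T' /= !inE (negbTE xw).
    move: Hleaf => /forallP /(_ x) /implyP /(_ xT) /implyP /(_ Hcx).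
    rewrite /subg_deg; congr (_ == _); apply: eq_card => y; rewrite !inE !xpair_eqE.
    by rewrite (negbTE xv) (negbTE xw).
have Hle : subg_le T T' by rewrite /subg_le /= !subsetUr.
move: (Hmax T'); rewrite HT' Hle /= => /eqP E; move: Hn; rewrite -E.
by rewrite /T' /= !inE ?eqxx.
Qed.

Lemma trunk_uniq T T' v : trk T -> trk T' -> v \in T.1 -> v \in T'.1 ->
  c v = None -> T = T'.
Proof.
move=> HT HT' Hv Hv' Hcv.
have /andP [HC /forallP Hmax] := HT.
have /andP [HC' _] := HT'.
have [Hsub _ _] := candP HC. have [Hsub' _ _] := candP HC'.
pose I x := (x \in T'.1) &&
  ((c x != None) ==> [exists y, [&& (x, y) \in T.2, c y == None & y \in T'.1]]).
have step : forall a z, I a -> (a, z) \in T.2 -> I z.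
  move=> a z /andP [Ha Hw] Haz.
  have [Hadj HaT HzT Hza] := subgP Hsub Haz.
  case: (eqVneq (c a) None) => Hca.
  - have Haz' := trunk_edge HT' Ha Hca Hadj.
    have [_ _ Hz' _] := subgP Hsub' Haz'.
    rewrite /I Hz' /=; apply/implyP => _; apply/existsP; exists a.
    by rewrite Hza Hca Ha eqxx.
  - move: Hw; rewrite Hca /= => /existsP [y /and3P [Hay /eqP Hcy HyT']].
    have E := leaf_uniq HC HaT Hca Haz Hay; subst z.
    by rewrite /I HyT' Hcy.
have walk : forall p a, I a -> path [rel a b | (a, b) \in T.2] a p -> I (last a p).
  by elim=> //= z p IH a Ia /andP [Haz Hp]; exact: IH _ (step _ _ Ia Haz) Hp.
have Iv : I v by rewrite /I Hv' Hcv.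
have allI : forall x, x \in T.1 -> I x.
  move=> x Hx; have /connectP [p Hp ->] := cand_conn HC Hv Hx.
  exact: walk.
have le : subg_le T T'.
  apply/andP; split; apply/subsetP.
  - by move=> x Hx; case/andP: (allI x Hx).
  - case=> x y Hxy; have [Hadj HxT _ Hyx] := subgP Hsub Hxy.
    have /andP [HxT' Hw] := allI x HxT.
    case: (eqVneq (c x) None) => Hcx; first exact: trunk_edge HT' HxT' Hcx Hadj.
    move: Hw; rewrite Hcx /= => /existsP [y' /and3P [Hxy' /eqP Hcy HyT']].
    have E := leaf_uniq HC HxT Hcx Hxy Hxy'; subst y'.
    have H := trunk_edge HT' HyT' Hcy (etrans (sym y x) Hadj).
    by have [_ _ _ ->] := subgP Hsub' H.
by move: (Hmax T'); rewrite HC' le /= => /eqP ->.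
Qed.

Lemma trunk_ex v : c v = None -> exists T, trk T && (v \in T.1).
Proof.
move=> Hcv.
pose P (R : subg V) := cand R && (v \in R.1).
pose R0 : subg V := ([set v], set0).
have P0 : P R0.
  rewrite /P /R0 /= inE eqxx andbT; apply/and3P; split.
  - by apply/forallP=> x; apply/forallP=> y; rewrite inE.
  - apply/andP; split; first by apply/set0Pn; exists v; rewrite inE.
    apply/forallP=> x; apply/implyP; rewrite inE => /eqP ->.
    apply/forallP=> y; apply/implyP; rewrite inE => /eqP ->; exact: connect0.
  - by apply/forallP=> x; apply/implyP; rewrite inE => /eqP ->; rewrite Hcv.
case: (arg_maxnP (fun R : subg V => #|R.1| + #|R.2|) P0) => T /andP [HT HvT] Hm.
exists T; rewrite HvT andbT /trunk HT /=.
apply/forallP => R'; apply/implyP => HR'; apply/implyP => /andP [H1 H2].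
have := Hm R'; rewrite /P HR' (subsetP H1 _ HvT) => /(_ isT) /= Hle.
have l1 := subset_leq_card H1; have l2 := subset_leq_card H2.
have e1 : R'.1 == T.1.
  rewrite eq_sym eqEcard H1 /= -(leq_add2r #|R'.2|); apply: leq_trans Hle _; by rewrite leq_add2l.
have e2 : R'.2 == T.2.
  rewrite eq_sym eqEcard H2 /= -(leq_add2l #|R'.1|); apply: leq_trans Hle _; by rewrite leq_add2r.
move: e1 e2; case: R' {HR' H1 H2 Hle l1 l2} => A B /= /eqP -> /eqP ->.
by case: T {HT HvT Hm}.
Qed.

Local Notation W := (@RV V adj 3 c).
Local Notation RA := (@R_adj V adj 3 c).
Local Notation RA' := (@R'_adj V adj 3 c).

Lemma copy_ex v : c v = None -> exists u : W, (val u).2 = v.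
Proof.
move=> Hcv; have [T HT] := trunk_ex Hcv.
by exists (@exist _ _ (T, v) HT).
Qed.

Lemma copy_uniq (u u' : W) : c (val u).2 = None -> (val u).2 = (val u').2 -> u = u'.
Proof.
move: u u' => [[T x] H] [[T' x'] H'] /= Hc Ex; subst x'.
have /andP [HT Hx] := H; have /andP [HT' Hx'] := H'.
have E : T = T' := trunk_uniq HT HT' Hx Hx' Hc.
subst T'.
by congr exist; apply: bool_irrelevance.
Qed.

Lemma edge_lift (u : W) w : c (val u).2 = None -> adj (val u).2 w ->
  exists u' : W, (val u').2 = w /\ RA u u'.
Proof.
move: u => [[T x] H] /= Hc Hxw.
have /andP [HT Hx] := H.
have Hxw' := trunk_edge HT Hx Hc Hxw.
have [Hsub _ _] := candP (andP HT).1.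
have [_ _ Hw _] := subgP Hsub Hxw'.
have H' : trk (T, w).1 && ((T, w).2 \in (T, w).1.1) by rewrite /= HT Hw.
exists (@exist _ _ (T, w) H'); split => //.
by rewrite /R_adj /= eqxx Hxw'.
Qed.

Lemma RA_adj (u u' : W) : RA u u' -> adj (val u).2 (val u').2.
Proof.
move: u => [[T x] H] /andP [_ Hxy] /=.
have /andP [HT _] := H.
have [Hsub _ _] := candP (andP HT).1.
by have [] := subgP Hsub Hxy.
Qed.

Lemma RA'_RA (u u' : W) : RA' u u' -> RA u u'.
Proof. by case/andP. Qed.

Lemma deg_sub (u : W) : degree RA' u <= degree RA u.
Proof.
apply: subset_leq_card; apply/subsetP => w; rewrite !inE; exact: RA'_RA.
Qed.

Lemma deg_eq (u : W) : 2 < degree RA u -> forall w, RA' u w = RA u w.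
Proof. by move=> H w; rewrite /R'_adj H orTb andbT. Qed.

Lemma high_iff (u : W) : (3 <= degree RA' u) = (3 <= degree RA u).
Proof.
case: (leqP 3 (degree RA u)) => H.
  suff -> : degree RA' u = degree RA u by rewrite H.
  by apply: eq_card => w; rewrite !inE deg_eq.
by apply/negbTE; rewrite -ltnNge; apply: leq_ltn_trans (deg_sub u) H.
Qed.

Lemma deg_F (u : W) : c (val u).2 = None -> degree adj (val u).2 <= degree RA u.
Proof.
move=> Hc.
apply: leq_trans (leq_imset_card (fun u' : W => (val u').2) [set u' | RA u u']).
apply: subset_leq_card; apply/subsetP => w; rewrite inE => Hw.
have [u' [Hu' Hr]] := edge_lift Hc Hw.
by apply/imsetP; exists u'; rewrite ?inE.
Qed.

Lemma legal_ex (d : V -> option 'I_3) v : degree adj v <= 2 -> exists a, legal adj d v a.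
Proof.
move=> Hd.
pose S := [set a : 'I_3 | [exists w, adj v w && (d w == Some a)]].
have HS : #|S| <= 2.
  apply: leq_trans Hd.
  apply: leq_trans (leq_imset_card (fun w => odflt ord0 (d w)) [set w | adj v w]).
  apply: subset_leq_card; apply/subsetP => a; rewrite inE => /existsP [w /andP [Hw /eqP E]].
  by apply/imsetP; exists w; rewrite ?inE // E.
have : ~~ ([set: 'I_3] \subset S).
  apply/negP => H; have := subset_leq_card H; rewrite cardsT card_ord.
  by move=> H'; have := leq_trans H' HS.
case/subsetPn => a _ Ha; exists a.
apply/forallP => w; apply/implyP => Hw; apply/negP => /eqP E; move/negP: Ha; apply.
by rewrite inE; apply/existsP; exists w; rewrite Hw E eqxx.
Qed.

Lemma low_phase n (d : V -> option 'I_3) :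
  #|[set v | d v == None]| <= n ->
  (forall v, d v = None -> degree adj v <= 2) ->
  cg_alice adj d /\ cg_bob adj d.
Proof.
elim: n d => [|n IH] d Hn Hg.
  have Hall : forall v, d v <> None.
    move=> v Hv; have : 0 < #|[set v | d v == None]| by apply/card_gt0P; exists v; rewrite inE Hv.
    by rewrite ltnNge Hn.
  by split; constructor.
have Hns : ~ stuck adj d.
  move=> [v [Hv Hna]]; have [a Ha] := legal_ex d (Hg v Hv).
  by have := Hna a; rewrite Ha.
have Hup : forall v a, d v = None ->
    cg_alice adj (upd d v a) /\ cg_bob adj (upd d v a).
  move=> v a Hv; apply: IH.
    rewrite -ltnS; apply: leq_trans Hn; apply: proper_card.
    apply/properP; split.
      apply/subsetP => w; rewrite !inE /upd; by case: (w == v).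
    by exists v; rewrite !inE /upd ?eqxx ?Hv.
  move=> w; rewrite /upd; case: (w == v) => // Hw; exact: Hg.
split.
  case: (boolP [exists v, d v == None]) => [/existsP [v /eqP Hv]|Hall].
    have [a Ha] := legal_ex d (Hg v Hv).
    exact: CGA_move Hns Hv Ha (Hup v a Hv).2.
  constructor => v Hv; move/negP: Hall; apply; apply/existsP; exists v; exact/eqP.
apply: CGB_move Hns _ => v a Hv _; exact: (Hup v a Hv).1.
Qed.

Definition fmap (d : V -> option 'I_3) : W -> option 'I_3 := fun u => d (val u).2.
Definition extc (d : V -> option 'I_3) := forall x, d x = None -> c x = None.

Lemma legal_up d (u : W) a : extc d -> d (val u).2 = None -> 3 <= degree RA u ->
  legal RA' (fmap d) u a -> legal adj d (val u).2 a.
Proof.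
move=> He Hd Hdeg Hl; apply/forallP => w; apply/implyP => Hw.
have [u' [Hu' Hr]] := edge_lift (He _ Hd) Hw.
have Hr' : RA' u u' by rewrite deg_eq.
move: Hl => /forallP /(_ u') /implyP /(_ Hr').
by rewrite /fmap Hu'.
Qed.

Lemma legal_down d (u : W) a : legal adj d (val u).2 a -> legal RA' (fmap d) u a.
Proof.
move=> Hl; apply/forallP => u'; apply/implyP => /RA'_RA /RA_adj Hr.
by move: Hl => /forallP /(_ (val u').2) /implyP /(_ Hr).
Qed.

Lemma upd_eq d (u : W) a : extc d -> d (val u).2 = None ->
  upd (fmap d) u a = fmap (upd d (val u).2 a).
Proof.
move=> He Hd; apply: functional_extensionality => u'.
rewrite /upd /fmap; case: (eqVneq u' u) => [->|ne]; first by rewrite !eqxx.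
case: (boolP ((val u').2 == (val u).2)) => [/eqP E|//].
exfalso; move/eqP: ne; apply; apply: (copy_uniq _ E); rewrite E; exact: He.
Qed.

Lemma ns d : extc d -> ~ stuck RA' (fmap d) -> ~ stuck adj d.
Proof.
move=> He Hns [v [Hv Hna]].
have [u Hu] := copy_ex (He v Hv); subst v.
case: (leqP 3 (degree RA u)) => Hdeg.
  apply: Hns; exists u; split => // a; apply/negP => Hl.
  by have := Hna a; rewrite (legal_up He Hv Hdeg Hl).
have [a Ha] := legal_ex d (leq_trans (deg_F (He _ Hv)) (Hdeg : degree RA u <= 2)).
by have := Hna a; rewrite Ha.
Qed.

Lemma done_good d : extc d -> rcg_done RA' (fmap d) ->
  forall v, d v = None -> degree adj v <= 2.
Proof.
move=> He Hdone v Hv.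
have [u Hu] := copy_ex (He v Hv); subst v.
have Hdeg : ~~ (3 <= degree RA u).
  rewrite -high_iff; apply/negP => Hh; exact: Hdone u Hh Hv.
apply: leq_trans (deg_F (He _ Hv)) _; by rewrite leqNgt.
Qed.

Lemma low d : extc d -> rcg_done RA' (fmap d) -> cg_alice adj d /\ cg_bob adj d.
Proof. move=> He Hd; exact: (low_phase (leqnn _) (done_good He Hd)). Qed.

Lemma sim_alice e : rcg_alice RA' e ->
  forall d, extc d -> e = fmap d -> cg_alice adj d.
Proof.
apply: (ra_ind (P := fun e _ => forall d, extc d -> e = fmap d -> cg_alice adj d)
               (P0 := fun e _ => forall d, extc d -> e = fmap d -> cg_bob adj d)).
- move=> e0 Hd d He E; subst e0; exact: (low He Hd).1.
- move=> e0 u a Hns Hh Hu Hl _ IH d He E; subst e0.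
  rewrite /high high_iff in Hh.
  apply: (CGA_move (v := (val u).2) (a := a) (ns He Hns) Hu (legal_up He Hu Hh Hl)).
  apply: IH; last exact: upd_eq.
  by move=> x; rewrite /upd; case: (x == (val u).2) => //; apply: He.
- move=> e0 Hd d He E; subst e0; exact: (low He Hd).2.
- move=> e0 Hns _ _ _ IH d He E; subst e0.
  apply: CGB_move (ns He Hns) _ => v a Hv Hl.
  have [u Hu] := copy_ex (He v Hv); subst v.
  apply: (IH u a Hv (legal_down Hl)); last exact: upd_eq.
  by move=> x; rewrite /upd; case: (x == (val u).2) => //; apply: He.
Qed.

Theorem main : rcg_bob RA' (@R_col V adj 3 c) -> cg_alice adj c.
Proof.
have He : extc c by [].
suff H : forall e, rcg_bob RA' e -> e = fmap c -> cg_alice adj c.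
  by move=> Hb; apply: (H _ Hb).
move=> e [e0 Hd|e0 Hns Ha _] E; subst.
- exact: (low He Hd).1.
- exact: sim_alice Ha c He erefl.
Qed.

End Graph.

Theorem lemma6p1 (V : finType) (adj : rel V) (c : V -> option 'I_3) :
  symmetric adj -> irreflexive adj -> forest adj -> proper_partial adj c ->
  alice_wins_rcg (@R'_adj V adj 3 c) (@R_col V adj 3 c) ->
  alice_wins_cg adj c.
Proof.
move=> sym irr forF _ H.
exact: (main sym irr forF H).
Qed.
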